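(* Let $\mathbb{F}$ be a non-Archimedean field and let $1\le s\le n$ be an integer. Then for every non-singular $n\times n$ matrix $T$ over $\mathbb{F}$, $\phi^s(T)=\max_{T_s}\|\det T_s\|$, the maximum taken over all $s\times s$ submatrices $T_s$ of $T$.
   Context: $\mathbb{F}$ carries a non-Archimedean absolute value $\|\cdot\|$. On $\mathbb{F}^n$, $\|x\|=\max_i\|x_i\|$; $\|T\|=\sup_{x\ne0}\|Tx\|/\|x\|$; $I_n=\{T:\|T\|=1=\|\det T\|\}$. Every non-singular $T$ factors as $T=PDQ$ with $P,Q\in I_n$, $D=\mathrm{diag}(\sigma_1,\dots,\sigma_n)$, $\|\sigma_1\|\ge\dots\ge\|\sigma_n\|>0$, and $\alpha_i=\|\sigma_i\|$ (the singular values of $T$) are uniquely determined by $T$. For integer $1\le s\le n$ the singular value function is $\phi^s(T)=\alpha_1\alpha_2\cdots\alpha_s$. *)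

(* Defs.v *)
From HB Require Import structures.
From mathcomp Require Import all_boot all_order all_algebra.
From mathcomp Require Import boolp classical_sets reals.
From Stdlib Require Import ClassicalEpsilon.
Set Implicit Arguments. Unset Strict Implicit. Unset Printing Implicit Defensive.
Import Order.TTheory GRing.Theory Num.Theory.
Local Open Scope ring_scope.
Local Open Scope classical_set_scope.

Section NonArch.
Variables (F : fieldType) (R : realType) (nv : F -> R).

Definition nonarch_abs : Prop :=
  [/\ forall x, 0 <= nv x,
      forall x, nv x = 0 <-> x = 0,
      forall x y, nv (x * y) = nv x * nv y
    & forall x y, nv (x + y) <= Num.max (nv x) (nv y)].

Variable n : nat.

Definition vnorm (x : 'cV[F]_n) : R := \big[Num.max/0]_(i < n) nv (x i 0).

Definition opnorm (T : 'M[F]_n) : R :=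
  sup [set vnorm (T *m x) / vnorm x | x in [set x : 'cV[F]_n | x != 0]].

Definition In_set : set 'M[F]_n :=
  [set T | opnorm T = 1 /\ nv (\det T) = 1].

Definition sv_decomp (T : 'M[F]_n) (d : 'rV[F]_n) : Prop :=
  exists P Q : 'M[F]_n,
    [/\ In_set P, In_set Q, T = P *m diag_mx d *m Q,
        (forall i j : 'I_n, (i <= j)%N -> nv (d 0 j) <= nv (d 0 i))
      & forall i : 'I_n, 0 < nv (d 0 i)].

Definition singvals (T : 'M[F]_n) : 'rV[R]_n :=
  map_mx nv (epsilon (inhabits 0) (sv_decomp T)).

Definition sv_fun (s : nat) (T : 'M[F]_n) : R :=
  \prod_(i < n | (i < s)%N) singvals T 0 i.

Definition max_minor (s : nat) (T : 'M[F]_n) : R :=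
  \big[Num.max/0]_(f : {ffun 'I_s -> 'I_n} | [forall i : 'I_s, forall j : 'I_s, (i < j)%N ==> (f i < f j)%N])
   \big[Num.max/0]_(g : {ffun 'I_s -> 'I_n} | [forall i : 'I_s, forall j : 'I_s, (i < j)%N ==> (g i < g j)%N])
     nv (\det (mxsub f g T)).

End NonArch.

(* Main.v *)
Require Import Defs.
From HB Require Import structures.
From mathcomp Require Import all_boot all_order all_algebra.
From mathcomp Require Import boolp classical_sets reals.
From Stdlib Require Import ClassicalEpsilon.
From mathcomp Require Import ring lra.
From mathcomp Require Import fingroup perm zify.
Set Implicit Arguments. Unset Strict Implicit. Unset Printing Implicit Defensive.
Import Order.TTheory GRing.Theory Num.Theory.
Local Open Scope ring_scope.

Section Basic.
Variables (F : fieldType) (R : realType) (nv : F -> R).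
Hypothesis Hnv : nonarch_abs nv.

Lemma nv_ge0 x : 0 <= nv x. Proof. by case: Hnv. Qed.
Lemma nv_eq0 x : (nv x == 0) = (x == 0).
Proof. by case: Hnv => _ h _ _; apply/eqP/eqP => /h. Qed.
Lemma nvM x y : nv (x * y) = nv x * nv y. Proof. by case: Hnv. Qed.
Lemma nvD x y : nv (x + y) <= Num.max (nv x) (nv y). Proof. by case: Hnv. Qed.
Lemma nv0 : nv 0 = 0. Proof. by apply/eqP; rewrite nv_eq0. Qed.
Lemma nv1 : nv 1 = 1.
Proof.
have h : nv 1 * nv 1 = nv 1 * 1 by rewrite -nvM mulr1 mulr1.
have n0 : nv 1 != 0 by rewrite nv_eq0 oner_eq0.
by move/(mulfI n0): h.
Qed.
Lemma nvN1 : nv (-1) = 1.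
Proof.
have h : nv (-1) * nv (-1) = 1 by rewrite -nvM mulrNN mulr1 nv1.
have p := nv_ge0 (-1).
have : (nv (-1) - 1) * (nv (-1) + 1) = 0 by rewrite mulrBl !mulrDr h; ring.
move/eqP; rewrite mulf_eq0 => /orP[]; first by rewrite subr_eq0 => /eqP.
move=> /eqP h2; exfalso; have : nv (-1) = -1 by rewrite -(subr0 (nv (-1))) -h2; ring.
by move=> e; move: p; rewrite e ler0N1.
Qed.
Lemma nvN x : nv (- x) = nv x.
Proof. by rewrite -mulN1r nvM nvN1 mul1r. Qed.
Lemma nvV x : nv (x^-1) = (nv x)^-1.
Proof.
have [->|x0] := eqVneq x 0; first by rewrite invr0 nv0 invr0.
have h : nv x * nv x^-1 = 1 by rewrite -nvM mulfV // nv1.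
rewrite -[LHS]mul1r -(mulVf (_ : nv x != 0)) ?nv_eq0 // -mulrA h mulr1 //.
Qed.
Lemma nvX x k : nv (x ^+ k) = nv x ^+ k.
Proof. by elim: k => [|k IH]; rewrite ?expr0 ?nv1 // !exprS nvM IH. Qed.
Lemma nv_sign (b : bool) : nv ((-1) ^+ b) = 1.
Proof. by case: b; rewrite ?expr1 ?expr0 ?nvN1 ?nv1. Qed.

Lemma nv_prod (I : Type) (r : seq I) (P : pred I) (G : I -> F) :
  nv (\prod_(i <- r | P i) G i) = \prod_(i <- r | P i) nv (G i).
Proof.
elim: r => [|a r IH]; first by rewrite !big_nil nv1.
by rewrite !big_cons; case: (P a); rewrite ?nvM IH.
Qed.

Lemma nv_sum_le (I : Type) (r : seq I) (P : pred I) (G : I -> F) (c : R) :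
  0 <= c -> (forall i, P i -> nv (G i) <= c) -> nv (\sum_(i <- r | P i) G i) <= c.
Proof.
move=> c0 H; elim: r => [|a r IH]; first by rewrite big_nil nv0.
rewrite big_cons; case: ifP => // Pa.
by apply: le_trans (nvD _ _) _; rewrite ge_max H.
Qed.

Lemma nv_prod_le1 (I : Type) (r : seq I) (P : pred I) (G : I -> F) :
  (forall i, P i -> nv (G i) <= 1) -> nv (\prod_(i <- r | P i) G i) <= 1.
Proof.
move=> H; rewrite nv_prod; apply: prodr_ile1 => i Pi; rewrite nv_ge0 ?H //.
Qed.

End Basic.

Section BigMax.
Variable (R : realType).
Lemma bmax_le (I : Type) (r : seq I) (P : pred I) (G : I -> R) (c : R) :
  0 <= c -> (forall i, P i -> G i <= c) -> \big[Num.max/0]_(i <- r | P i) G i <= c.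
Proof.
move=> c0 H; elim: r => [|a r IH]; first by rewrite big_nil.
by rewrite big_cons; case: ifP => // Pa; rewrite ge_max H.
Qed.
Lemma le_bmaxP (I : eqType) (r : seq I) (P : pred I) (G : I -> R) i :
  i \in r -> P i -> G i <= \big[Num.max/0]_(j <- r | P j) G j.
Proof.
elim: r => [|a r IH] //; rewrite inE big_cons => /orP[/eqP-> Pa|ir Pi].
  by rewrite Pa le_max lexx.
by case: ifP => _; rewrite ?le_max IH ?orbT.
Qed.
Lemma bmax_ge0 (I : Type) (r : seq I) (P : pred I) (G : I -> R) :
  0 <= \big[Num.max/0]_(i <- r | P i) G i.
Proof.
elim: r => [|a r IH]; rewrite ?big_nil // big_cons; case: ifP => // _.
by rewrite le_max IH orbT.
Qed.
Lemma le_bmax_fin (I : finType) (P : pred I) (G : I -> R) i :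
  P i -> G i <= \big[Num.max/0]_(j | P j) G j.
Proof. by move=> Pi; apply: le_bmaxP => //; rewrite mem_index_enum. Qed.
End BigMax.
Lemma le_bmax_tr (R : realType) (I : finType) (P : pred I) (G : I -> R) i x :
  P i -> x <= G i -> x <= \big[Num.max/0]_(j | P j) G j.
Proof. by move=> Pi h; apply: le_trans h (le_bmax_fin _ Pi). Qed.

Section Mat.
Variables (F : fieldType) (R : realType) (nv : F -> R).
Hypothesis Hnv : nonarch_abs nv.

Definition bnd m n (c : R) (A : 'M[F]_(m, n)) := forall i j, nv (A i j) <= c.

Lemma bnd_mull m n p c (A : 'M[F]_(m, n)) (B : 'M[F]_(n, p)) :
  0 <= c -> bnd 1 A -> bnd c B -> bnd c (A *m B).
Proof.
move=> c0 hA hB i j; rewrite mxE; apply: nv_sum_le => // k _.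
by rewrite (nvM Hnv) -[c]mul1r ler_pM // ?nv_ge0.
Qed.

Lemma bnd_mulr m n p c (A : 'M[F]_(m, n)) (B : 'M[F]_(n, p)) :
  0 <= c -> bnd c A -> bnd 1 B -> bnd c (A *m B).
Proof.
move=> c0 hA hB i j; rewrite mxE; apply: nv_sum_le => // k _.
by rewrite (nvM Hnv) -[c]mulr1 ler_pM // ?nv_ge0.
Qed.

Lemma bnd_det n (A : 'M[F]_n) : bnd 1 A -> nv (\det A) <= 1.
Proof.
move=> hA; apply: nv_sum_le => // s _.
rewrite (nvM Hnv) (nv_sign Hnv) mul1r; apply: (nv_prod_le1 Hnv) => i _; exact: hA.
Qed.

Definition Gm n (P : 'M[F]_n) := bnd 1 P /\ nv (\det P) = 1.

Lemma Gm_mul n (P Q : 'M[F]_n) : Gm P -> Gm Q -> Gm (P *m Q).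
Proof.
move=> [hP dP] [hQ dQ]; split; first exact: bnd_mull.
by rewrite det_mulmx (nvM Hnv) dP dQ mulr1.
Qed.

Lemma Gm_unit n (P : 'M[F]_n) : Gm P -> P \in unitmx.
Proof.
move=> [_ dP]; rewrite unitmxE unitfE -(nv_eq0 Hnv) dP; exact: oner_neq0.
Qed.

Lemma Gm_inv n (P : 'M[F]_n) : Gm P -> Gm (invmx P).
Proof.
move=> GP; have uP := Gm_unit GP; case: GP => hP dP; split; last first.
  by rewrite det_inv (nvV Hnv) dP invr1.
move=> i j; rewrite /invmx uP !mxE (nvM Hnv) (nvV Hnv) dP invr1 mul1r.
rewrite /cofactor (nvM Hnv) (nvX Hnv) (nvN1 Hnv) expr1n mul1r.
by apply: bnd_det => a b; rewrite !mxE.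
Qed.

Lemma Gm1 n : Gm (1%:M : 'M[F]_n).
Proof.
split; last by rewrite det1 (nv1 Hnv).
by move=> i j; rewrite mxE; case: (i == j); rewrite ?(nv1 Hnv) ?(nv0 Hnv).
Qed.

Lemma Gm_perm n (s : 'S_n) : Gm (perm_mx s).
Proof.
split; last by rewrite det_perm (nv_sign Hnv).
by move=> i j; rewrite /perm_mx !mxE; case: (_ == _); rewrite ?(nv1 Hnv) ?(nv0 Hnv).
Qed.

Lemma det_mulmx_exp s n (X : 'M[F]_(s, n)) (Y : 'M[F]_(n, s)) :
  \det (X *m Y) = \sum_(f : {ffun 'I_s -> 'I_n})
     (\prod_i X i (f i)) * \det (\matrix_(i, j) Y (f i) j).
Proof.
transitivity (\sum_(σ : 'S_s) \sum_(f : {ffun 'I_s -> 'I_n})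
   (-1) ^+ σ * \prod_i (X i (f i) * Y (f i) (σ i))).
  apply: eq_bigr => σ _; rewrite -big_distrr /=; congr (_ * _).
  under eq_bigr do rewrite mxE; rewrite bigA_distr_bigA /=; apply: eq_bigr => i _ //.
rewrite exchange_big /=; apply: eq_bigr => f _.
rewrite big_distrr /=; apply: eq_bigr => σ _.
rewrite big_split /=.
have -> : \prod_i (\matrix_(i0, j) Y (f i0) j) i (σ i) = \prod_i Y (f i) (σ i).
  by apply: eq_bigr => i _; rewrite mxE.
by rewrite mulrCA.
Qed.

Lemma det_mulmx_bound s n (X : 'M[F]_(s, n)) (Y : 'M[F]_(n, s)) :
  bnd 1 X -> nv (\det (X *m Y)) <=
    \big[Num.max/0]_(f : {ffun 'I_s -> 'I_n}) nv (\det (\matrix_(i, j) Y (f i) j)).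
Proof.
move=> hX; rewrite det_mulmx_exp; apply: nv_sum_le => //; first exact: bmax_ge0.
move=> f _; rewrite (nvM Hnv); apply: (le_bmax_tr (i := f)) => //.
rewrite -[X in _ <= X]mul1r ler_pM ?nv_ge0 //.
  all: try (rewrite (nv_prod Hnv); apply: prodr_ge0 => i _; exact: nv_ge0).
all: try (by apply: nv_prod_le1 => // i _; apply: hX).
Qed.

Definition Mall s n (A : 'M[F]_n) : R :=
  \big[Num.max/0]_(f : {ffun 'I_s -> 'I_n}) \big[Num.max/0]_(g : {ffun 'I_s -> 'I_n})
     nv (\det (mxsub f g A)).

Lemma Mall_ge0 s n (A : 'M[F]_n) : 0 <= Mall s A.
Proof. exact: bmax_ge0. Qed.

Lemma le_Mall s n (A : 'M[F]_n) (f g : {ffun 'I_s -> 'I_n}) :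
  nv (\det (mxsub f g A)) <= Mall s A.
Proof.
apply: (le_bmax_tr (i := f)) => //; exact: (le_bmax_tr (i := g)).
Qed.

Lemma Mall_le s n (A : 'M[F]_n) c :
  0 <= c -> (forall f g : {ffun 'I_s -> 'I_n}, nv (\det (mxsub f g A)) <= c) ->
  Mall s A <= c.
Proof.
move=> c0 H; rewrite /Mall; apply: (big_ind (fun x => x <= c)) => //; first by move=> x y; rewrite ge_max => -> ->.
move=> f _; apply: (big_ind (fun x => x <= c)) => //; first by move=> x y; rewrite ge_max => -> ->.
Qed.

Lemma Mall_mull s n (P A : 'M[F]_n) : bnd 1 P -> Mall s (P *m A) <= Mall s A.
Proof.
move=> hP; apply: Mall_le; first exact: Mall_ge0.
move=> f g; rewrite mxsub_mul; apply: le_trans (det_mulmx_bound _ _) _.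
  by move=> i j; rewrite mxE; apply: hP.
apply: bmax_le; first exact: Mall_ge0.
move=> k _; apply: le_trans (le_Mall A k g); rewrite le_eqVlt; apply/orP; left.
by apply/eqP; congr (nv (\det _)); apply/matrixP => i j; rewrite !mxE.
Qed.

Lemma Mall_mulr s n (A Q : 'M[F]_n) : bnd 1 Q -> Mall s (A *m Q) <= Mall s A.
Proof.
move=> hQ; apply: Mall_le; first exact: Mall_ge0.
move=> f g; rewrite mxsub_mul -det_tr trmx_mul.
apply: le_trans (det_mulmx_bound _ _) _.
  by move=> i j; rewrite !mxE; apply: hQ.
apply: bmax_le; first exact: Mall_ge0.
move=> k _; apply: le_trans (le_Mall A f k); rewrite le_eqVlt; apply/orP; left.
apply/eqP; rewrite -det_tr; congr (nv (\det _)); apply/matrixP => i j; rewrite !mxE //.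
Qed.

End Mat.

Section Reorder.
Variables (F : fieldType) (R : realType) (nv : F -> R).
Hypothesis Hnv : nonarch_abs nv.

Definition incr s n (h : {ffun 'I_s -> 'I_n}) :=
  [forall i : 'I_s, forall j : 'I_s, (i < j)%N ==> (h i < h j)%N].

Lemma enum_sorted n (S : {set 'I_n}) : sorted (relpre val ltn) (enum S).
Proof.
have h : sorted (relpre val ltn) (enum 'I_n) by rewrite -sorted_map val_enum_ord iota_ltn_sorted.
have -> : enum S = [seq x <- enum 'I_n | x \in S] by rewrite enumT.
apply: sorted_filter => // a b c; exact: ltn_trans.
Qed.

Lemma reorder s n (Hsn : (s <= n)%N) (Y : 'M[F]_(n, s)) (k : 'I_s -> 'I_n) :
  exists h : {ffun 'I_s -> 'I_n}, incr h /\
    nv (\det (rowsub k Y)) <= nv (\det (rowsub h Y)).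
Proof.
case: (boolP (injectiveb k)) => [/injectiveP kinj | /injectivePn [i1 [i2 ni12 e12]]]; last first.
  exists [ffun i => widen_ord Hsn i]; split.
    by apply/forallP => i; apply/forallP => j; apply/implyP; rewrite !ffunE.
  rewrite (determinant_alternate ni12) ?(nv0 Hnv) ?nv_ge0 // => j.
  by rewrite !mxE e12.
set S := [set k x | x in 'I_s].
set e := enum S.
have se : size e = s by rewrite /e -cardE card_imset // card_ord.
have ke : forall i, k i \in e by move=> i; rewrite mem_enum; apply: imset_f.
pose h := [ffun i : 'I_s => nth (k i) e i].
have ie : forall i, (index (k i) e < s)%N by move=> i; rewrite -se index_mem.
pose sg := fun i => Ordinal (ie i).
have sginj : injective sg.
  move=> i j /(congr1 val) /= eij; apply: kinj.
  by rewrite -(nth_index (k i) (ke i)) eij nth_index.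
exists h; split.
  apply/forallP => i; apply/forallP => j; apply/implyP => ij; rewrite !ffunE.
  rewrite (set_nth_default (k i) (k j)); last by rewrite se.
  have := @sorted_ltn_nth _ (relpre val ltn) _ (k i) e (enum_sorted S).
  apply => //; rewrite ?inE ?se //.
  by move=> a b c; exact: ltn_trans.
have -> : rowsub k Y = rowsub (perm sginj) (rowsub h Y).
  apply/matrixP => i j; rewrite !mxE permE ffunE /= nth_index //.
have -> : rowsub (perm sginj) (rowsub h Y) = row_perm (perm sginj) (rowsub h Y) by apply/matrixP => i j; rewrite !mxE.
rewrite row_permE det_mulmx det_perm (nvM Hnv) (nv_sign Hnv) mul1r //.
Qed.

Lemma Mall_minor s n (Hsn : (s <= n)%N) (A : 'M[F]_n) :
  Mall nv s A = max_minor nv s A.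
Proof.
apply/eqP; rewrite eq_le; apply/andP; split.
  apply: Mall_le; first exact: bmax_ge0.
  move=> f g.
  have [h1 [ih1 le1]] := reorder Hsn (colsub g A) f.
  have [h2 [ih2 le2]] := reorder Hsn (rowsub h1 A)^T g.
  apply: (le_bmax_tr (i := h1)) => //.
  apply: (le_bmax_tr (i := h2)) => //.
  have -> : mxsub f g A = rowsub f (colsub g A) by apply/matrixP => i j; rewrite !mxE.
  apply: le_trans le1 _.
  have -> : rowsub h1 (colsub g A) = mxsub h1 g A by apply/matrixP => i j; rewrite !mxE.
  rewrite -det_tr.
  have -> : (mxsub h1 g A)^T = rowsub g (rowsub h1 A)^T by apply/matrixP => i j; rewrite !mxE.
  apply: le_trans le2 _.
  rewrite -det_tr.
  have -> : (rowsub h2 (rowsub h1 A)^T)^T = mxsub h1 h2 A by apply/matrixP => i j; rewrite !mxE.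
  by [].
apply: bmax_le; first exact: Mall_ge0.
move=> f _; apply: bmax_le; first exact: Mall_ge0.
by move=> g _; apply: le_Mall.
Qed.

End Reorder.

Section Comb.
Variable (R : realType).

Lemma card_topset s n (Hsn : (s <= n)%N) : #|[set j : 'I_n | (j < s)%N]| = s.
Proof.
have -> : [set j : 'I_n | (j < s)%N] = [set widen_ord Hsn i | i in 'I_s].
  apply/setP => j; rewrite inE; apply/idP/imsetP => [js | [i _ ->]]; last by rewrite /= ltn_ord.
  by exists (Ordinal js) => //; apply: val_inj.
rewrite card_imset ?card_ord // => a b /(congr1 val) /= ab; exact: val_inj.
Qed.

Lemma prod_top s n (Hsn : (s <= n)%N) (x : 'I_n -> R) (A : {set 'I_n}) :
  (forall j, 0 <= x j) -> (forall i j : 'I_n, (i <= j)%N -> x j <= x i) ->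
  #|A| = s -> \prod_(j in A) x j <= \prod_(j in [set j : 'I_n | (j < s)%N]) x j.
Proof.
move=> x0 xdec cA; set B := [set j : 'I_n | (j < s)%N].
have cB := card_topset Hsn.
rewrite (@big_setID _ _ _ _ A B) (@big_setID _ _ _ _ B A) [B :&: A]finset.setIC /=.
have m_eq : #|A :\: B| = #|B :\: A| by rewrite !cardsD cA cB finset.setIC.
apply: ler_pM; [apply: prodr_ge0 => *; exact: x0 | apply: prodr_ge0 => *; exact: x0 | exact: lexx | ].
case: (posnP #|B :\: A|) => [c0|cpos].
  have e2 := cards0_eq c0; have e1 : A :\: B = finset.set0 by apply: cards0_eq; rewrite m_eq c0.
  by rewrite e1 e2 !big_set0.
have [b0 bBA] : exists b0, b0 \in B :\: A by apply/set0Pn; rewrite -card_gt0.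
have b0s : (b0 < s)%N by move: bBA; rewrite !inE => /andP[_].
have sn : (s.-1 < n)%N by apply: leq_trans Hsn; rewrite prednK // (leq_ltn_trans _ b0s).
pose c := x (Ordinal sn).
apply: (@le_trans _ _ (\prod_(j in A :\: B) c)).
  apply: ler_prod => j; rewrite !inE => /andP[jB _]; rewrite x0 /=; apply: xdec => /=.
  move: jB b0s; rewrite -leqNgt; lia.
rewrite prodr_const m_eq -prodr_const.
apply: ler_prod => j; rewrite !inE => /andP[_ jB]; rewrite /c x0 /=; apply: xdec => /=.
move: jB b0s; lia.
Qed.
End Comb.

Section Diag.
Variables (F : fieldType) (R : realType) (nv : F -> R).
Hypothesis Hnv : nonarch_abs nv.

Lemma top_prod_eq s n (Hsn : (s <= n)%N) (G : 'I_n -> R) :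
  \prod_(j in [set j : 'I_n | (j < s)%N]) G j = \prod_(i < n | (i < s)%N) G i.
Proof. by apply: eq_bigl => j; rewrite inE. Qed.

Lemma Mall_diag s n (Hsn : (s <= n)%N) (d : 'rV[F]_n) :
  (forall i j : 'I_n, (i <= j)%N -> nv (d 0 j) <= nv (d 0 i)) ->
  Mall nv s (diag_mx d) = \prod_(i < n | (i < s)%N) nv (d 0 i).
Proof.
move=> dec; apply/eqP; rewrite eq_le; apply/andP; split.
  apply: Mall_le; first by apply: prodr_ge0 => *; exact: nv_ge0.
  move=> f g.
  case: (boolP (injectiveb f)) => [/injectiveP finj | /injectivePn [i1 [i2 ni12 e12]]]; last first.
    rewrite (determinant_alternate ni12) ?(nv0 Hnv); first by apply: prodr_ge0 => *; exact: nv_ge0.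
    by move=> j; rewrite !mxE e12.
  apply: (@le_trans _ _ (\prod_i nv (d 0 (f i)))).
    apply: nv_sum_le => //; first by apply: prodr_ge0 => *; exact: nv_ge0.
    move=> σ _; rewrite (nvM Hnv) (nv_sign Hnv) mul1r (nv_prod Hnv).
    apply: ler_prod => i _; rewrite nv_ge0 //= !mxE.
    by case: (_ == _); rewrite ?mulr1n ?mulr0n ?(nv0 Hnv) ?lexx ?nv_ge0.
  rewrite -(@big_imset _ _ _ _ _ f [pred x | true] (fun j => nv (d 0 j))); last by move=> a b _ _; apply: finj.
  rewrite -top_prod_eq //; apply: prod_top => //.
    by move=> j; exact: nv_ge0.
  by rewrite card_imset // cardT size_enum_ord.
pose w := [ffun i : 'I_s => widen_ord Hsn i].
apply: le_trans (le_Mall nv (diag_mx d) w w).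
have -> : mxsub w w (diag_mx d) = diag_mx (\row_i d 0 (w i)).
  apply/matrixP => i j; rewrite !mxE !ffunE; congr (_ *+ _).
rewrite det_diag (nv_prod Hnv).
rewrite (eq_bigl (fun i : 'I_n => xpredT i && (i < s)%N)) // (big_ord_narrow_cond Hsn) /=.
by apply: ler_prod => i _; rewrite (nv_ge0 Hnv) !mxE ffunE lexx.
Qed.
End Diag.

Lemma ex_max (R : realType) (I : finType) (i0 : I) (G : I -> R) :
  exists i, forall j, G j <= G i.
Proof.
case: (@arg_maxP _ R I i0 xpredT G isT) => i _ H; exists i => j; exact: H.
Qed.

Lemma split1n n (i : 'I_(1 + n)) : i = lshift n 0 \/ exists k, i = rshift 1 k.
Proof.
have := splitK i; case: (split i) => [a|b] /= <-; [left; rewrite ord1 // | right; exists b => //].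
Qed.

Section Exist.
Variables (F : fieldType) (R : realType) (nv : F -> R).
Hypothesis Hnv : nonarch_abs nv.

Lemma bnd_block m1 m2 n1 n2 c (A : 'M[F]_(m1, n1)) (B : 'M[F]_(m1, n2))
  (C : 'M[F]_(m2, n1)) (D : 'M[F]_(m2, n2)) :
  bnd nv c A -> bnd nv c B -> bnd nv c C -> bnd nv c D -> bnd nv c (block_mx A B C D).
Proof.
move=> hA hB hC hD i j.
have := splitK i; have := splitK j.
case: (split i) => [a|b] /= <-; case: (split j) => [a'|b'] /= <-;
 rewrite ?block_mxEul ?block_mxEur ?block_mxEdl ?block_mxEdr //.
Qed.

Lemma bnd0 m n c : 0 <= c -> bnd nv c (0 : 'M[F]_(m, n)).
Proof. by move=> c0 i j; rewrite mxE (nv0 Hnv). Qed.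

Lemma Gm_block1 n (P : 'M[F]_n) : Gm nv P -> Gm nv (block_mx (1%:M : 'M_1) 0 0 P).
Proof.
move=> [hP dP]; split; last by rewrite det_ublock det1 mul1r.
apply: bnd_block => //; try exact: bnd0.
by case: (Gm1 Hnv 1).
Qed.

End Exist.

Section Exist2.
Variables (F : fieldType) (R : realType) (nv : F -> R).
Hypothesis Hnv : nonarch_abs nv.

Definition decomp n (T : 'M[F]_n) :=
  exists P Q (d : 'rV[F]_n), [/\ Gm nv P, Gm nv Q, T = P *m diag_mx d *m Q,
    (forall i j : 'I_n, (i <= j)%N -> nv (d 0 j) <= nv (d 0 i))
  & forall i, 0 < nv (d 0 i)].

Lemma perm_mxE_l n (s : 'S_n) (A : 'M[F]_n) i j : (perm_mx s *m A) i j = A (s i) j.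
Proof. by rewrite -row_permE mxE. Qed.

Lemma perm_mxE_r n (a b : 'I_n) (A : 'M[F]_n) i j :
  (A *m perm_mx (tperm a b)) i j = A i (tperm a b j).
Proof. by rewrite -{1}(tpermV a b) -col_permE mxE. Qed.

Lemma tperm_mx_inv n (a b : 'I_n) : perm_mx (tperm a b) *m perm_mx (tperm a b) = 1%:M :> 'M[F]_n.
Proof. by rewrite -perm_mxM tperm2 perm_mx1. Qed.

Lemma decomp_step n (T1 : 'M[F]_(1 + n)) :
  (forall C : 'M[F]_n, C \in unitmx -> decomp C) ->
  T1 \in unitmx -> (forall i j, nv (T1 i j) <= nv (T1 0 0)) -> decomp T1.
Proof.
move=> IH uT1 hmax.
set a := T1 0 0.
have a0 : a != 0.
  apply/negP => /eqP a0; move: uT1; rewrite unitmxE unitfE.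
  have -> : T1 = 0.
    apply/matrixP => i j; rewrite mxE; apply/eqP; rewrite -(nv_eq0 Hnv) eq_le nv_ge0 // andbT.
    by have := hmax i j; rewrite -/a a0 (nv0 Hnv).
  by rewrite det0 eqxx.
have na0 : 0 < nv a by rewrite lt_def nv_ge0 // andbT (nv_eq0 Hnv).
set u := ursubmx T1; set v := dlsubmx T1; set B := drsubmx T1.
set C := B - a^-1 *: (v *m u).
set L := block_mx (1%:M : 'M_1) 0 (a^-1 *: v) (1%:M : 'M_n).
set U := block_mx (1%:M : 'M_1) (a^-1 *: u) 0 (1%:M : 'M_n).
set Mid := block_mx (a%:M : 'M_1) 0 0 C.
have hul : ulsubmx T1 = a%:M.
  rewrite [ulsubmx T1]mx11_scalar; congr (_%:M); rewrite !mxE /=; congr (T1 _ _); exact: val_inj.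
have eT1 : T1 = L *m Mid *m U.
  rewrite /L /Mid /U !mulmx_block.
  rewrite !mulmx0 !mul0mx !mul1mx !mulmx1 !addr0 !add0r.
  rewrite -{1}(submxK T1) hul -/u -/v -/B; congr block_mx.
  - by rewrite mul_scalar_mx scalerA mulfV // scale1r.
  - by rewrite mul_mx_scalar scalerA mulfV // scale1r.
  - by rewrite mul_mx_scalar scalerA mulfV // scale1r -scalemxAr /C addrC subrK.
have dL : \det L = 1 by rewrite det_lblock !det1 mulr1.
have dU : \det U = 1 by rewrite det_ublock !det1 mulr1.
have dT1 : \det T1 = a * \det C by rewrite eT1 !det_mulmx dL dU det_ublock det_scalar1 mul1r mulr1.
have uC : C \in unitmx.
  move: uT1; rewrite !unitmxE !unitfE dT1 mulf_eq0 negb_or => /andP[_ //].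
have [P' [Q' [d' [GP' GQ' eC dec' pos']]]] := IH C uC.
have hv : forall i, nv (a^-1 * v i 0) <= 1.
  move=> i; rewrite (nvM Hnv) (nvV Hnv) mulrC ler_pdivrMr // mul1r /v !mxE; exact: hmax.
have hu : forall j, nv (a^-1 * u 0 j) <= 1.
  move=> j; rewrite (nvM Hnv) (nvV Hnv) mulrC ler_pdivrMr // mul1r /u !mxE; exact: hmax.
have GL : Gm nv L.
  split; last by rewrite dL (nv1 Hnv).
  rewrite /L; apply: bnd_block => //; try exact: (bnd0 Hnv); try exact: (Gm1 Hnv _).1.
  by move=> i j; rewrite mxE ord1; apply: hv.
have GU : Gm nv U.
  split; last by rewrite dU (nv1 Hnv).
  rewrite /U; apply: bnd_block => //; try exact: (bnd0 Hnv); try exact: (Gm1 Hnv _).1.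
  by move=> i j; rewrite mxE ord1; apply: hu.
have bC : bnd nv (nv a) C.
  move=> i j; rewrite /C !mxE big_ord1.
  apply: le_trans (nvD Hnv _ _) _; rewrite ge_max; apply/andP; split.
    exact: hmax.
  rewrite (nvN Hnv) !(nvM Hnv) (nvV Hnv) /v /u !mxE.
  rewrite ler_pdivrMl //.
  by apply: ler_pM; rewrite ?(nv_ge0 Hnv) // hmax.
have bd' : forall k, nv (d' 0 k) <= nv a.
  move=> k.
  have GPi := Gm_inv Hnv GP'; have GQi := Gm_inv Hnv GQ'.
  have eD : diag_mx d' = invmx P' *m C *m invmx Q'.
    by rewrite eC !mulmxA mulVmx ?(Gm_unit Hnv GP') // mul1mx mulmxK ?(Gm_unit Hnv GQ').
  have := (bnd_mulr Hnv (ltW na0) (bnd_mull Hnv (ltW na0) GPi.1 bC) GQi.1) k k.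
  by rewrite -eD mxE eqxx mulr1n.
pose l : 'rV[F]_1 := \row_i a.
have dl : diag_mx l = a%:M by apply/matrixP => i j; rewrite !mxE !ord1 eqxx.
pose P0 : 'M[F]_(1 + n) := L *m block_mx (1%:M : 'M_1) 0 0 P'. pose Q0 : 'M[F]_(1 + n) := block_mx (1%:M : 'M_1) 0 0 Q' *m U. pose d0 : 'rV[F]_(1 + n) := row_mx l d'. exists P0, Q0, d0.
split.
- by apply: (Gm_mul Hnv) => //; apply: Gm_block1.
- by apply: (Gm_mul Hnv) => //; apply: Gm_block1.
- rewrite eT1 diag_mx_row dl /Mid eC.
  rewrite -!mulmxA; congr (_ *m _); rewrite !mulmxA; congr (_ *m _).
  rewrite !mulmx_block !mulmx0 !mul0mx !mul1mx !mulmx1 !addr0 !add0r. by rewrite mul0mx.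
- rewrite /d0 => i j ij.
  case: (split1n i) => [ei | [k ei]]; case: (split1n j) => [ej | [k' ej]]; rewrite ei ej in ij *.
  all: rewrite ?row_mxEl ?row_mxEr ?mxE ?lexx //.
  by apply: dec'; move: ij => /=; lia.
- rewrite /d0 => i; case: (split1n i) => [-> | [k ->]]; rewrite ?row_mxEl ?row_mxEr ?mxE //.
Qed.

Lemma decomp_all n (T : 'M[F]_n) : T \in unitmx -> decomp T.
Proof.
elim: n T => [|n IH] T uT.
  exists 1%:M, 1%:M, 0; split; try exact: Gm1.
  - by apply/matrixP => [[]].
  - by case.
  - by case.
have [[i0 j0] hm] := ex_max (0, 0) (fun ij : 'I_n.+1 * 'I_n.+1 => nv (T ij.1 ij.2)).
set t1 := tperm 0 i0; set t2 := tperm 0 j0.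
pose T1 : 'M[F]_(1 + n) := perm_mx t1 *m T *m perm_mx t2.
have eT1 : forall i j, T1 i j = T (t1 i) (t2 j).
  by move=> i j; rewrite /T1 perm_mxE_r perm_mxE_l.
have hmax : forall i j, nv (T1 i j) <= nv (T1 0 0).
  move=> i j; rewrite !eT1 /t1 /t2 !tpermL; exact: (hm (t1 i, t2 j)).
have uT1 : T1 \in unitmx.
  by rewrite /T1 !unitmx_mul !unitmx_perm uT.
have [P [Q [d [GP GQ e dec pos]]]] := decomp_step IH uT1 hmax.
exists (perm_mx t1 *m P), (Q *m perm_mx t2), d; split => //.
- by apply: (Gm_mul Hnv) => //; apply: Gm_perm.
- by apply: (Gm_mul Hnv) => //; apply: Gm_perm.
have -> : T = perm_mx t1 *m T1 *m perm_mx t2.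
  by rewrite /T1 !mulmxA tperm_mx_inv mul1mx -mulmxA tperm_mx_inv mulmx1.
by rewrite e !mulmxA.
Qed.

End Exist2.


Local Open Scope classical_set_scope.
Section Op.
Variables (F : fieldType) (R : realType) (nv : F -> R).
Hypothesis Hnv : nonarch_abs nv.

Lemma vnorm_ge0 n (x : 'cV[F]_n) : 0 <= vnorm nv x.
Proof. exact: bmax_ge0. Qed.

Lemma vnorm_entry n (x : 'cV[F]_n) i : nv (x i 0) <= vnorm nv x.
Proof. exact: (le_bmax_tr (i := i)). Qed.

Lemma vnorm_gt0 n (x : 'cV[F]_n) : x != 0 -> 0 < vnorm nv x.
Proof.
move=> x0.
have [i xi] : exists i, x i 0 != 0.
  apply/not_existsP => H; move/eqP: x0; apply; apply/matrixP => i j.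
  rewrite ord1 mxE; apply/eqP; apply/negPn/negP => h; exact: (H i h).
apply: lt_le_trans (vnorm_entry x i).
by rewrite lt_def (nv_ge0 Hnv) andbT (nv_eq0 Hnv).
Qed.

Lemma vnorm_mul n (P : 'M[F]_n) x : bnd nv 1 P -> vnorm nv (P *m x) <= vnorm nv x.
Proof.
move=> hP; apply: bmax_le; first exact: vnorm_ge0.
move=> i _; rewrite mxE; apply: (nv_sum_le Hnv); first exact: vnorm_ge0.
move=> k _; rewrite (nvM Hnv) -[vnorm _ _]mul1r.
by apply: ler_pM; rewrite ?(nv_ge0 Hnv) ?hP ?vnorm_entry.
Qed.

Lemma opset_ub n (P : 'M[F]_n) :
  has_ubound [set vnorm nv (P *m x) / vnorm nv x | x in [set x : 'cV[F]_n | x != 0]].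
Proof.
pose K := \big[Num.max/0]_(ij : 'I_n * 'I_n) nv (P ij.1 ij.2).
have K0 : 0 <= K by exact: bmax_ge0.
exists K => y [x /= x0 <-].
rewrite ler_pdivrMr ?vnorm_gt0 //.
apply: bmax_le; first by rewrite mulr_ge0 ?vnorm_ge0.
move=> i _; rewrite mxE; apply: (nv_sum_le Hnv); first by rewrite mulr_ge0 ?vnorm_ge0.
move=> k _; rewrite (nvM Hnv).
apply: ler_pM; rewrite ?(nv_ge0 Hnv) ?vnorm_entry //.
exact: (le_bmax_tr (i := (i, k))).
Qed.

Lemma vnorm_delta n (j : 'I_n) : vnorm nv (delta_mx j 0 : 'cV[F]_n) = 1.
Proof.
apply/eqP; rewrite eq_le; apply/andP; split.
  apply: bmax_le => // i _; rewrite mxE.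
  by case: (_ && _); rewrite ?(nv1 Hnv) ?(nv0 Hnv).
by apply: le_trans (vnorm_entry _ j); rewrite mxE !eqxx (nv1 Hnv).
Qed.

Lemma delta_neq0 n (j : 'I_n) : (delta_mx j 0 : 'cV[F]_n) != 0.
Proof.
apply/negP => /eqP/matrixP/(_ j 0); rewrite !mxE !eqxx /=; apply/eqP; exact: oner_neq0.
Qed.

Lemma In_Gm n (P : 'M[F]_n) : In_set nv P -> Gm nv P.
Proof.
move=> [o d]; split => // i j.
set e : 'cV[F]_n := delta_mx j 0.
have : nv (P i j) <= vnorm nv (P *m e) / vnorm nv e.
  rewrite vnorm_delta divr1 -colE.
  by apply: le_trans (vnorm_entry _ i); rewrite mxE.
move/le_trans; apply; rewrite -o; apply: sup_upper_bound.
  split; last exact: opset_ub.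
  by exists (vnorm nv (P *m e) / vnorm nv e); exists e => //=; exact: delta_neq0.
by exists e => //=; exact: delta_neq0.
Qed.

Lemma Gm_In n (P : 'M[F]_n) : (0 < n)%N -> Gm nv P -> In_set nv P.
Proof.
move=> n0 GP; split; last by case: GP.
have ratio : forall x : 'cV[F]_n, x != 0 -> vnorm nv (P *m x) / vnorm nv x = 1.
  move=> x x0.
  have e : vnorm nv (P *m x) = vnorm nv x.
    apply/eqP; rewrite eq_le vnorm_mul ?GP.1 //=.
    have h := @vnorm_mul _ (invmx P) (P *m x) (Gm_inv Hnv GP).1.
    by rewrite mulmxA (mulVmx (Gm_unit Hnv GP)) mul1mx in h.
    by case: GP.
  by rewrite e divff // gt_eqF // vnorm_gt0.

rewrite /opnorm.
have -> : [set vnorm nv (P *m x) / vnorm nv x | x in [set x : 'cV[F]_n | x != 0]] = [set 1].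
  apply/seteqP; split => y.
    by case=> x /= x0 <-; rewrite ratio.
  move=> /= ->; exists (delta_mx (Ordinal n0) 0) => /=; first exact: delta_neq0.
  by rewrite ratio // delta_neq0.
exact: sup1.
Qed.

End Op.

Theorem lemma3p2 (F : fieldType) (R : realType) (nv : F -> R)
  (Hnv : nonarch_abs nv) (n s : nat) (Hs1 : (1 <= s)%N) (Hsn : (s <= n)%N)
  (T : 'M[F]_n) (HT : T \in unitmx) :
  sv_fun nv s T = max_minor nv s T.
Proof.
have n0 : (0 < n)%N by apply: leq_trans Hsn.
have ex : exists d, sv_decomp nv T d.
  have [P [Q [d [GP GQ e dec pos]]]] := decomp_all Hnv HT.
  by exists d, P, Q; split => //; apply: Gm_In.
rewrite /sv_fun /singvals.
have := epsilon_spec (inhabits 0) (sv_decomp nv T) ex.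
set d := epsilon _ _ => -[P [Q [IP IQ eT dec pos]]].
have GP := In_Gm Hnv IP; have GQ := In_Gm Hnv IQ.
rewrite -Mall_minor //.
have -> : Mall nv s T = Mall nv s (diag_mx d).
  apply/eqP; rewrite eq_le; apply/andP; split.
    rewrite eT; apply: le_trans (Mall_mulr Hnv s (P *m diag_mx d) GQ.1) _.
    exact: (Mall_mull Hnv s (diag_mx d) GP.1).
  have -> : diag_mx d = invmx P *m T *m invmx Q.
    by rewrite eT !mulmxA (mulVmx (Gm_unit Hnv GP)) mul1mx mulmxK ?(Gm_unit Hnv GQ).
  apply: le_trans (Mall_mulr Hnv s (invmx P *m T) (Gm_inv Hnv GQ).1) _.
  exact: (Mall_mull Hnv s T (Gm_inv Hnv GP).1).
rewrite Mall_diag //.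
by apply: eq_bigr => i _; rewrite mxE.
Qed.
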